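(* If a polynomial $p\in\mathbb C[X_{12},X_{13},X_{23}]$ satisfies $\hat H_1^{(-2)}p=\hat H_2^{(-2)}p=\hat H_3^{(-2)}p=0$, then $p$ is constant. That is, $\ker\hat H_1^{(-2)}\cap\ker\hat H_2^{(-2)}\cap\ker\hat H_3^{(-2)}=\mathbb C$ on $\mathbb C[X_{12},X_{13},X_{23}]$.
   Context: The operators (with rational coefficients, mapping polynomials to rational functions) are $$\hat H_1^{(-2)}=\frac{\partial^2}{\partial X_{12}^2}+\frac{\partial^2}{\partial X_{13}^2}+\frac{X_{12}^2+X_{13}^2-X_{23}^2}{X_{12}X_{13}}\frac{\partial^2}{\partial X_{12}\partial X_{13}}+\frac{2}{X_{12}}\frac{\partial}{\partial X_{12}}+\frac{2}{X_{13}}\frac{\partial}{\partial X_{13}},$$ $$\hat H_2^{(-2)}=\frac{\partial^2}{\partial X_{12}^2}+\frac{\partial^2}{\partial X_{23}^2}+\frac{X_{12}^2+X_{23}^2-X_{13}^2}{X_{12}X_{23}}\frac{\partial^2}{\partial X_{12}\partial X_{23}}+\frac{2}{X_{12}}\frac{\partial}{\partial X_{12}}+\frac{2}{X_{23}}\frac{\partial}{\partial X_{23}},$$ $$\hat H_3^{(-2)}=\frac{\partial^2}{\partial X_{13}^2}+\frac{\partial^2}{\partial X_{23}^2}+\frac{X_{13}^2+X_{23}^2-X_{12}^2}{X_{13}X_{23}}\frac{\partial^2}{\partial X_{13}\partial X_{23}}+\frac{2}{X_{13}}\frac{\partial}{\partial X_{13}}+\frac{2}{X_{23}}\frac{\partial}{\partial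 X_{23}}.$$ *)

(* Defs.v *)
From HB Require Import structures.
From mathcomp Require Import all_boot all_order all_algebra.
From mathcomp Require Import fraction.
From mathcomp Require Import mpoly.
Set Implicit Arguments. Unset Strict Implicit. Unset Printing Implicit Defensive.
Import Order.TTheory GRing.Theory Num.Theory.
Local Open Scope ring_scope.

(* Variables: index 0 = X12, index 1 = X13, index 2 = X23. *)
Notation tofrac := (@FracField.tofrac _).
Notation "x %:F" := (tofrac x) : ring_scope.

Section Ops.
Variable C : numClosedFieldType.
Notation P := {mpoly C[3]}.
Notation F := {fraction P}.

Definition i12 : 'I_3 := @Ordinal 3 0 isT.
Definition i13 : 'I_3 := @Ordinal 3 1 isT.
Definition i23 : 'I_3 := @Ordinal 3 2 isT.

Definition Hop (a b c : 'I_3) (p : P) : F :=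
  let Xa : F := ('X_a : P)%:F in
  let Xb : F := ('X_b : P)%:F in
  let Xc : F := ('X_c : P)%:F in
  (p^`M(a)^`M(a))%:F + (p^`M(b)^`M(b))%:F
  + (Xa ^+ 2 + Xb ^+ 2 - Xc ^+ 2) / (Xa * Xb) * (p^`M(a)^`M(b))%:F
  + 2%:R / Xa * (p^`M(a))%:F + 2%:R / Xb * (p^`M(b))%:F.

Definition H1 (p : P) : F := Hop i12 i13 i23 p.
Definition H2 (p : P) : F := Hop i12 i23 i13 p.
Definition H3 (p : P) : F := Hop i13 i23 i12 p.
End Ops.

(* Main.v *)
Require Import Defs.
From HB Require Import structures.
From mathcomp Require Import all_boot all_order all_algebra.
From mathcomp Require Import fraction.
From mathcomp Require Import mpoly.
From mathcomp Require Import ring zify.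
Import GRing.Theory Num.Theory.
Local Open Scope ring_scope.

Lemma mcoeffXM (C : numClosedFieldType) (q : {mpoly C[3]}) m T :
  ('X_[m] * q)@_T = if (m <= T)%MM then q@_(T - m) else 0.
Proof.
case: ifP => h.
  by rewrite -{1}(submK h) addmC mulrC mcoeffMX.
rewrite mulrC mcoeffM; apply: big1 => k /eqP hT; rewrite mcoeffX.
case: eqP => [e|]; last by rewrite mulr0.
have : (m <= T)%MM by apply/mnm_lepP => l; rewrite (congr1 (fun t : 'X_{1..3} => t l) hT) /= -e mnmDE leq_addl.
by rewrite h.
Qed.

Lemma XaE (C : numClosedFieldType) (a : 'I_3) : ('X_a : {mpoly C[3]}) = 'X_[U_(a)].
Proof. by []. Qed.

Definition N {C : numClosedFieldType} (a b c : 'I_3) (p : {mpoly C[3]}) : {mpoly C[3]} :=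
  'X_a * 'X_b * p^`M(a)^`M(a) + 'X_a * 'X_b * p^`M(b)^`M(b)
  + 'X_a ^+ 2 * p^`M(a)^`M(b) + 'X_b ^+ 2 * p^`M(a)^`M(b) - 'X_c ^+ 2 * p^`M(a)^`M(b)
  + ('X_b * p^`M(a)) *+ 2 + ('X_a * p^`M(b)) *+ 2.

Lemma coef2 (C : numClosedFieldType) (p : {mpoly C[3]}) m d1 d2 T :
  ('X_[m] * p^`M(d1)^`M(d2))@_T = if (m <= T)%MM then
     p@_(T - m + U_(d2) + U_(d1))%MM *+ (((T - m + U_(d2))%MM d1).+1 * ((T - m)%MM d2).+1)%N else 0.
Proof. by rewrite mcoeffXM; case: ifP => // _; rewrite !mcoeff_mderiv mulrnA. Qed.

Lemma coef1 (C : numClosedFieldType) (p : {mpoly C[3]}) m d1 T :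
  ('X_[m] * p^`M(d1))@_T = if (m <= T)%MM then
     p@_(T - m + U_(d1))%MM *+ ((T - m)%MM d1).+1 else 0.
Proof. by rewrite mcoeffXM; case: ifP => // _; rewrite !mcoeff_mderiv. Qed.

Definition dist3 (a b c : 'I_3) := [&& a != b, a != c & b != c].

Lemma cov3 a b c l : dist3 a b c -> [|| l == a, l == b | l == c].
Proof. by case: a => [[|[|[|?]]] ?]; case: b => [[|[|[|?]]] ?]; case: c => [[|[|[|?]]] ?]; case: l => [[|[|[|?]]] ?]. Qed.

Ltac dist_simpl h a b c :=
  let hab := fresh in let hac := fresh in let hbc := fresh in
  case/and3P: (h) => hab hac hbc;
  rewrite ?eqxx ?(negbTE hab) ?(negbTE hac) ?(negbTE hbc)
     ?(eq_sym b a) ?(eq_sym c a) ?(eq_sym c b) ?(negbTE hab) ?(negbTE hac) ?(negbTE hbc) /=.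



Ltac gtac h a b c :=
  let H := fresh "H" in
  apply/idP/idP;
  [ move/mnm_lepP; intro H; move: (H a) (H b) (H c); rewrite ?mnmDE ?mnm1E; dist_simpl h a b c; lia
  | intro H; apply/mnm_lepP; let l := fresh "l" in intro l; case/or3P: (@cov3 a b c l h) => /eqP ->;
    rewrite ?mnmDE ?mnm1E; move: H; dist_simpl h a b c; lia ].

Ltac mtac h a b c :=
  apply/mnmP; let l := fresh "l" in intro l; case/or3P: (@cov3 a b c l h) => /eqP ->;
  rewrite !(mnmDE, mnmBE, mnm1E); dist_simpl h a b c; lia.

Lemma mnc (C : numClosedFieldType) (p : {mpoly C[3]}) m1 m2 (n1 n2 : nat) :
  m1 = m2 -> n1 = n2 -> p@_m1 *+ n1 = p@_m2 *+ n2.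
Proof. by move=> -> ->. Qed.

Lemma tA (C : numClosedFieldType) (p : {mpoly C[3]}) a b c T : dist3 a b c ->
  ('X_a * 'X_b * p^`M(a)^`M(a))@_T = if (0 < T a)%N && (0 < T b)%N then
     p@_(T + U_(a) - U_(b))%MM *+ (T a * (T a).+1)%N else 0.
Proof.
move=> h; rewrite -mpolyXD coef2.
have -> : (U_(a) + U_(b) <= T)%MM = (0 < T a)%N && (0 < T b)%N by gtac h a b c.
case h12 : ((0 < T a)%N && (0 < T b)%N).
2: by [].
case/andP: h12 => h1 h2.
apply: mnc.
  by mtac h a b c.
rewrite !(mnmDE, mnmBE, mnm1E); dist_simpl h a b c; nia.
Qed.

Lemma tB (C : numClosedFieldType) (p : {mpoly C[3]}) a b c T : dist3 a b c ->
  ('X_a * 'X_b * p^`M(b)^`M(b))@_T = if (0 < T a)%N && (0 < T b)%N then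
     p@_(T + U_(b) - U_(a))%MM *+ (T b * (T b).+1)%N else 0.
Proof.
move=> h; rewrite -mpolyXD coef2.
have -> : (U_(a) + U_(b) <= T)%MM = (0 < T a)%N && (0 < T b)%N by gtac h a b c.
case h12 : ((0 < T a)%N && (0 < T b)%N).
2: by [].
case/andP: h12 => h1 h2.
apply: mnc.
  by mtac h a b c.
rewrite !(mnmDE, mnmBE, mnm1E); dist_simpl h a b c; nia.
Qed.

Lemma tC (C : numClosedFieldType) (p : {mpoly C[3]}) a b c T : dist3 a b c ->
  ('X_a ^+ 2 * p^`M(a)^`M(b))@_T = if (1 < T a)%N then
     p@_(T + U_(b) - U_(a))%MM *+ ((T a).-1 * (T b).+1)%N else 0.
Proof.
move=> h; rewrite expr2 -mpolyXD coef2.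
have -> : (U_(a) + U_(a) <= T)%MM = (1 < T a)%N by gtac h a b c.
case h1 : (1 < T a)%N.
2: by [].
apply: mnc.
  by mtac h a b c.
rewrite !(mnmDE, mnmBE, mnm1E); dist_simpl h a b c; nia.
Qed.

Lemma tD (C : numClosedFieldType) (p : {mpoly C[3]}) a b c T : dist3 a b c ->
  ('X_b ^+ 2 * p^`M(a)^`M(b))@_T = if (1 < T b)%N then
     p@_(T + U_(a) - U_(b))%MM *+ ((T a).+1 * (T b).-1)%N else 0.
Proof.
move=> h; rewrite expr2 -mpolyXD coef2.
have -> : (U_(b) + U_(b) <= T)%MM = (1 < T b)%N by gtac h a b c.
case h1 : (1 < T b)%N.
2: by [].
apply: mnc.
  by mtac h a b c.
rewrite !(mnmDE, mnmBE, mnm1E); dist_simpl h a b c; nia.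
Qed.

Lemma tE (C : numClosedFieldType) (p : {mpoly C[3]}) a b c T : dist3 a b c ->
  ('X_c ^+ 2 * p^`M(a)^`M(b))@_T = if (1 < T c)%N then
     p@_(T + U_(a) + U_(b) - U_(c) - U_(c))%MM *+ ((T a).+1 * (T b).+1)%N else 0.
Proof.
move=> h; rewrite expr2 -mpolyXD coef2.
have -> : (U_(c) + U_(c) <= T)%MM = (1 < T c)%N by gtac h a b c.
case h1 : (1 < T c)%N.
2: by [].
apply: mnc.
  by mtac h a b c.
rewrite !(mnmDE, mnmBE, mnm1E); dist_simpl h a b c; nia.
Qed.

Lemma tF (C : numClosedFieldType) (p : {mpoly C[3]}) a b c T : dist3 a b c ->
  ('X_b * p^`M(a))@_T = if (0 < T b)%N then
     p@_(T + U_(a) - U_(b))%MM *+ (T a).+1 else 0.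
Proof.
move=> h; rewrite coef1.
have -> : (U_(b) <= T)%MM = (0 < T b)%N by gtac h a b c.
case h1 : (0 < T b)%N.
2: by [].
apply: mnc.
  by mtac h a b c.
rewrite !(mnmDE, mnmBE, mnm1E); dist_simpl h a b c; nia.
Qed.

Lemma tG (C : numClosedFieldType) (p : {mpoly C[3]}) a b c T : dist3 a b c ->
  ('X_a * p^`M(b))@_T = if (0 < T a)%N then
     p@_(T + U_(b) - U_(a))%MM *+ (T b).+1 else 0.
Proof.
move=> h; rewrite coef1.
have -> : (U_(a) <= T)%MM = (0 < T a)%N by gtac h a b c.
case h1 : (0 < T a)%N.
2: by [].
apply: mnc.
  by mtac h a b c.
rewrite !(mnmDE, mnmBE, mnm1E); dist_simpl h a b c; nia.
Qed.

Lemma Ncoef (C : numClosedFieldType) (p : {mpoly C[3]}) a b c T : dist3 a b c ->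
  (N a b c p)@_T =
    (if (0 < T b)%N then p@_(T + U_(a) - U_(b))%MM *+ ((T a).+1 * (T a + T b).+1)%N else 0)
  + (if (0 < T a)%N then p@_(T + U_(b) - U_(a))%MM *+ ((T b).+1 * (T a + T b).+1)%N else 0)
  - (if (1 < T c)%N then p@_(T + U_(a) + U_(b) - U_(c) - U_(c))%MM *+ ((T a).+1 * (T b).+1)%N else 0).
Proof.
move=> h; rewrite /N !(mcoeffD, mcoeffN, mcoeffMn) (tA _ _ _ _ _ _ h) (tB _ _ _ _ _ _ h) (tC _ _ _ _ _ _ h)
  (tD _ _ _ _ _ _ h) (tE _ _ _ _ _ _ h) (tF _ _ _ _ _ _ h) (tG _ _ _ _ _ _ h).
move: (p@_ _) (p@_ _) (p@_ _) => x y z.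
move: (T a) (T b) (T c) => i j k.
case: i => [|[|i]]; case: j => [|[|j]]; case: k => [|[|k]] /=; ring.
Qed.

Lemma X_neq0 (C : numClosedFieldType) (a : 'I_3) : (('X_a : {mpoly C[3]})%:F) != 0.
Proof.
rewrite tofrac_eq0; apply/eqP => /(congr1 (mcoeff U_(a))).
by rewrite mcoeffX eqxx mcoeff0 => /eqP; rewrite oner_eq0.
Qed.

Lemma alg (F : fieldType) (xa xb xc pa pb d e g : F) : xa != 0 -> xb != 0 ->
  (pa + pb + (xa ^+ 2 + xb ^+ 2 - xc ^+ 2) / (xa * xb) * d + 2%:R / xa * e + 2%:R / xb * g) * (xa * xb)
  = xa * xb * pa + xa * xb * pb + xa * xa * d + xb * xb * d - xc * xc * d +
  (xb * e + xb * e) + (xa * g + xa * g).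
Proof. by move=> ha hb; field; rewrite ha hb. Qed.

Lemma HopN (C : numClosedFieldType) (p : {mpoly C[3]}) a b c :
  Hop a b c p * (('X_a * 'X_b : {mpoly C[3]})%:F) = (N a b c p)%:F.
Proof.
have ha := X_neq0 C a; have hb := X_neq0 C b.
rewrite /Hop /N !(tofracD, tofracN, tofracM, tofracMn, tofracXn).
move: ha hb.
move: (tofrac ('X_a : {mpoly C[3]})) (tofrac ('X_b : {mpoly C[3]})) (tofrac ('X_c : {mpoly C[3]})).
move: (tofrac (p^`M(a)^`M(a))) (tofrac (p^`M(b)^`M(b))) (tofrac (p^`M(a)^`M(b))).
move: (tofrac (p^`M(a))) (tofrac (p^`M(b))) => e g pa pb d xa xb xc ha hb.
exact: (alg _ _ _ _ _ _ _ _ _ ha hb).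
Qed.

Lemma Hop0 (C : numClosedFieldType) (p : {mpoly C[3]}) a b c :
  Hop a b c p = 0 -> N a b c p = 0.
Proof. by move=> h; apply/eqP; rewrite -tofrac_eq0 -HopN h mul0r. Qed.

Definition mk (i j k : nat) : 'X_{1..3} := [multinom nth 0%N [:: i; j; k] l | l < 3].

Lemma mkx i j k : mk i j k i12 = i. Proof. by rewrite mnmE. Qed.
Lemma mky i j k : mk i j k i13 = j. Proof. by rewrite mnmE. Qed.
Lemma mkz i j k : mk i j k i23 = k. Proof. by rewrite mnmE. Qed.
Lemma mkD i j k i' j' k' : (mk i j k + mk i' j' k')%MM = mk (i+i') (j+j') (k+k').
Proof. by apply/mnmP => l; rewrite !mnmE; case: l => [[|[|[|]]]]. Qed.
Lemma mkB i j k i' j' k' : (mk i j k - mk i' j' k')%MM = mk (i-i') (j-j') (k-k').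
Proof. by apply/mnmP => l; rewrite !mnmE; case: l => [[|[|[|]]]]. Qed.
Lemma Ux : (U_(i12) = mk 1 0 0)%MM. Proof. by apply/mnmP => l; rewrite !mnmE; case: l => [[|[|[|]]]]. Qed.
Lemma Uy : (U_(i13) = mk 0 1 0)%MM. Proof. by apply/mnmP => l; rewrite !mnmE; case: l => [[|[|[|]]]]. Qed.
Lemma Uz : (U_(i23) = mk 0 0 1)%MM. Proof. by apply/mnmP => l; rewrite !mnmE; case: l => [[|[|[|]]]]. Qed.
Lemma mkT (T : 'X_{1..3}) : T = mk (T i12) (T i13) (T i23).
Proof. by apply/mnmP => l; rewrite !mnmE; case: l => [[|[|[|]]]] //= ?; congr (T _); apply/val_inj. Qed.

Lemma d1 : dist3 i12 i13 i23. Proof. by []. Qed.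
Lemma d2 : dist3 i12 i23 i13. Proof. by []. Qed.
Lemma d3 : dist3 i13 i23 i12. Proof. by []. Qed.



Ltac coefeq h d T e :=
  have e := congr1 (mcoeff T) (Hop0 _ _ _ _ _ h);
  rewrite (Ncoef _ _ _ _ _ _ d) mcoeff0 ?mkx ?mky ?mkz ?Ux ?Uy ?Uz !mkD !mkB in e;
  rewrite ?ltnS ?leq0n ?ltn0 /= in e;
  rewrite ?(addn0, add0n, subn0, sub0n, subSS, addSn, addnS) in e.

Lemma nz (C : numClosedFieldType) (n : nat) (x : C) : (0 < n)%N -> n%:R * x = 0 -> x = 0.
Proof. by move=> hn /eqP; rewrite mulf_eq0 pnatr_eq0 eqn0Ngt hn /= => /eqP. Qed.

Lemma caseK4 (C : numClosedFieldType) (p : {mpoly C[3]}) K :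
  H1 p = 0 -> H2 p = 0 -> H3 p = 0 -> p@_(mk 0 0 K.+4) = 0.
Proof.
move=> h1 h2 h3.
coefeq h3 d3 (mk 0 1 K.+3) e1.
coefeq h1 d1 (mk 1 1 K.+2) e2.
coefeq h2 d2 (mk 1 2 K.+1) e3.
coefeq h3 d3 (mk 2 1 K.+1) e4.
move: e1 e2 e3 e4.
move: (p@_(mk 0 0 K.+4)) (p@_(mk 0 2 K.+2)) (p@_(mk 2 0 K.+2)) (p@_(mk 2 2 K)) => b v u w.
move=> e1 e2 e3 e4.
have := congr2 (fun x y => x - y) e3 e4; rewrite subrr => e34.
have huv : v = u.
  apply/eqP; rewrite -subr_eq0; apply/eqP; apply: (@nz _ (K.+2 * K.+4.+1)) => //.
  by rewrite -e34; ring.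
subst u.
have hw : w = v *+ 3.
  apply/eqP; rewrite eq_sym -subr_eq0; apply/eqP; apply: (@nz _ 4) => //.
  by rewrite -e2; ring.
subst w.
have hv : v = 0.
  by apply: (@nz _ (K.+4 * K.+4.+1)) => //; rewrite -e3; ring.
subst v.
by apply: (@nz _ (K.+4 * K.+4.+1)) => //; rewrite -e1; ring.
Qed.

Lemma lin3 (C : numClosedFieldType) (al be ga x y z t : C) :
  x = 0 -> y = 0 -> z = 0 -> t = al * x + be * y + ga * z -> t = 0.
Proof. by move=> -> -> -> ->; rewrite !mulr0 !addr0. Qed.

Lemma caseK1 (C : numClosedFieldType) (p : {mpoly C[3]}) :
  H1 p = 0 -> H2 p = 0 -> H3 p = 0 -> p@_(mk 0 0 1) = 0.
Proof.
move=> h1 h2 h3.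
coefeq h3 d3 (mk 0 1 0) e1.
move: e1; move: (p@_(mk 0 0 1)) => b e1.
by apply: (@nz _ 2) => //; rewrite -e1; ring.
Qed.

Lemma caseK2 (C : numClosedFieldType) (p : {mpoly C[3]}) :
  H1 p = 0 -> H2 p = 0 -> H3 p = 0 -> p@_(mk 0 0 2) = 0.
Proof.
move=> h1 h2 h3.
coefeq h3 d3 (mk 0 1 1) e1.
coefeq h2 d2 (mk 1 0 1) e2.
coefeq h1 d1 (mk 1 1 0) e3.
move: e1 e2 e3; move: (p@_(mk 0 0 2)) (p@_(mk 0 2 0)) (p@_(mk 2 0 0)) => b v u e1 e2 e3.
apply: (@nz _ 12) => //.
by apply: (lin3 _ 1 1 (-1) _ _ _ _ e1 e2 e3); ring.
Qed.

Lemma caseK3 (C : numClosedFieldType) (p : {mpoly C[3]}) :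
  H1 p = 0 -> H2 p = 0 -> H3 p = 0 -> p@_(mk 0 0 3) = 0.
Proof.
move=> h1 h2 h3.
coefeq h3 d3 (mk 0 1 2) e1.
coefeq h1 d1 (mk 1 1 1) e2.
coefeq h2 d2 (mk 1 2 0) e3.
move: e1 e2 e3; move: (p@_(mk 0 0 3)) (p@_(mk 0 2 1)) (p@_(mk 2 0 1)) => b v u e1 e2 e3.
apply: (@nz _ 36) => //.
by apply: (lin3 _ 3 (-2) (-6) _ _ _ _ e1 e2 e3); ring.
Qed.

Lemma topx (C : numClosedFieldType) (p : {mpoly C[3]}) (m : 'X_{1..3}) :
  H1 p = 0 -> H2 p = 0 -> H3 p = 0 -> p@_m != 0 ->
  (forall m' : 'X_{1..3}, p@_m' != 0 -> (m' i23 <= m i23)%N) -> m i12 = 0%N.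
Proof.
move=> h1 h2 h3 hm hmax.
have hz : forall m' : 'X_{1..3}, (m i23 < m' i23)%N -> p@_m' = 0.
  move=> m' hlt; apply/eqP; apply/negPn/negP => /hmax; by rewrite leqNgt hlt.
have eqm := mkT m.
case Ei : (m i12) eqm => [//|i] eqm.
coefeq h2 d2 (mk i (m i13) (m i23).+1) e.
rewrite (hz (mk (i - 1) (m i13) (m i23).+2)) ?mkz //
  (hz (mk i.+1 (m i13 - 1 - 1) (m i23).+2)) ?mkz // -eqm in e.
move: e; rewrite !mul0rn !if_same subr0 addr0 => /eqP.
by rewrite mulrn_eq0 (negbTE hm) orbF.
Qed.

Lemma topy (C : numClosedFieldType) (p : {mpoly C[3]}) (m : 'X_{1..3}) :
  H1 p = 0 -> H2 p = 0 -> H3 p = 0 -> p@_m != 0 ->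
  (forall m' : 'X_{1..3}, p@_m' != 0 -> (m' i23 <= m i23)%N) -> m i13 = 0%N.
Proof.
move=> h1 h2 h3 hm hmax.
have hz : forall m' : 'X_{1..3}, (m i23 < m' i23)%N -> p@_m' = 0.
  move=> m' hlt; apply/eqP; apply/negPn/negP => /hmax; by rewrite leqNgt hlt.
have eqm := mkT m.
case Ei : (m i13) eqm => [//|i] eqm.
coefeq h3 d3 (mk (m i12) i (m i23).+1) e.
rewrite (hz (mk (m i12) (i - 1) (m i23).+2)) ?mkz //
  (hz (mk (m i12 - 1 - 1) i.+1 (m i23).+2)) ?mkz // -eqm in e.
move: e; rewrite !mul0rn !if_same subr0 addr0 => /eqP.
by rewrite mulrn_eq0 (negbTE hm) orbF.
Qed.

Lemma zK (C : numClosedFieldType) (p : {mpoly C[3]}) K :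
  H1 p = 0 -> H2 p = 0 -> H3 p = 0 -> (0 < K)%N -> p@_(mk 0 0 K) = 0.
Proof.
move=> h1 h2 h3; case: K => [//|[|[|[|K]]]] _.
- exact: caseK1.
- exact: caseK2.
- exact: caseK3.
- exact: caseK4.
Qed.

Lemma bigmax_wit (T : eqType) (r : seq T) (F : T -> nat) :
  r != [::] -> exists2 x, x \in r & (\max_(y <- r) F y)%N = F x.
Proof.
elim: r => // a r IH _; rewrite big_cons.
case: (eqVneq r [::]) => [->|hr].
  by exists a; rewrite ?big_nil ?maxn0 ?inE ?eqxx.
have [x xr ->] := IH hr.
case: (leqP (F a) (F x)) => h.
  by exists x; rewrite ?inE ?xr ?orbT.
by exists a; rewrite ?inE ?eqxx.
Qed.

Lemma mk000 : mk 0 0 0 = 0%MM.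
Proof. by apply/mnmP => l; rewrite !mnmE; case: l => [[|[|[|]]]]. Qed.

Theorem mainTheorem8 (C : numClosedFieldType) (p : {mpoly C[3]}) :
  H1 p = 0 -> H2 p = 0 -> H3 p = 0 -> exists c : C, p = c%:MP.
Proof.
move=> h1 h2 h3; exists (p@_0%MM).
set K := (\max_(m <- msupp p) m i23)%N.
have hle : forall m' : 'X_{1..3}, p@_m' != 0 -> (m' i23 <= K)%N.
  by move=> m' hm; apply: leq_bigmax_seq => //; rewrite mcoeff_msupp.
have K0 : K = 0%N.
  case: (eqVneq (msupp p) [::]) => [e|hne]; first by rewrite /K e big_nil.
  have [m0 m0s hK] := @bigmax_wit _ _ (fun m : 'X_{1..3} => m i23) hne.
  rewrite -/K in hK; rewrite mcoeff_msupp in m0s.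
  have hmax : forall m', p@_m' != 0 -> (m' i23 <= m0 i23)%N by rewrite -hK.
  have hx := topx _ _ _ h1 h2 h3 m0s hmax; have hy := topy _ _ _ h1 h2 h3 m0s hmax.
  case: (posnP K) => // hKp.
  by move: m0s; rewrite (mkT m0) hx hy -hK (zK _ _ _ h1 h2 h3 hKp) => /eqP.
apply/mpolyP => m; rewrite mcoeffC.
case: (eqVneq m 0%MM) => [->|hm]; first by rewrite mulr1.
rewrite mulr0; apply/eqP; apply/negPn/negP => hpm.
have hz : m i23 = 0%N by apply/eqP; have := hle m hpm; rewrite K0 leqn0.
have hmax : forall m', p@_m' != 0 -> (m' i23 <= m i23)%N by rewrite hz; move=> m' /hle; rewrite K0.
have hx := topx _ _ _ h1 h2 h3 hpm hmax; have hy := topy _ _ _ h1 h2 h3 hpm hmax.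
by move: hm; rewrite (mkT m) hx hy hz mk000 eqxx.
Qed.
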